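(* Let $\mathcal A$ be a commutative semiring, $V=\mathcal A^{(n)}$ free with basis $b_1,\dots,b_n$ (or $b_0,\dots,b_{n-1}$), and $\mathfrak G(V)$ its standard reduced Grassmann semialgebra. Let $2\le k<n$ and $u,u'\in\mathfrak G(V)_k$. (i) If $u\wedge v=u'\wedge v$ for all $v\in\mathfrak G(V)_{n-k}$, then $u=u'$. (ii) If $u\notin\overline{\mathfrak G(V)_k^\circ}$, then there is some $v\in\mathfrak G(V)_{n-k}$ with $u\wedge v\notin\overline{\mathfrak G(V)_n^\circ}$.
   Context: $\mathfrak G(V)=\bigoplus_r\mathfrak G(V)_r$ with $\mathfrak G(V)_0=\mathcal A$, $\mathfrak G(V)_1=V$, and for $r\ge2$, $\mathfrak G(V)_r$ the free $\mathcal A$-module with basis $\{b_I,b_I':|I|=r\}$ where $b_I=b_{i_1}\wedge\cdots\wedge b_{i_r}$ for increasing indices and $b_I'=(-)b_I$; $(-)$ is the $\mathcal A$-linear involution of $\mathfrak G(V)_r$ ($r\ge2$) exchanging $b_I$ and $b_I'$, compatible with the associative graded product $\wedge$, which satisfies $b_i\wedge b_i=\mathbb 0$ and $u\wedge w=(-)(w\wedge u)$ for $u,w\in V$. A quasi-zero is an element $x+(-)x$. $\overline{\mathfrak G^\circ}$ denotes the ideal of $\mathfrak G(V)$ generated by all quasi-zeros and all elements $w\wedge w$, $w\in V$, and $\overline{\mathfrak G(V)_r^\circ}$ its degree-$r$ part. *)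

(* Defs.v *)
From HB Require Import structures.
From mathcomp Require Import all_boot all_order all_algebra.
Set Implicit Arguments. Unset Strict Implicit. Unset Printing Implicit Defensive.
Import GRing.Theory.
Local Open Scope ring_scope.

(* An element of G(V) = (+)_r G(V)_r is encoded by its coefficients on the
   "signed basis" indexed by pairs (I, s) with I a subset of 'I_n and s : bool:
     (I, false) <-> b_I,   (I, true) <-> b_I' = (-) b_I   (only for #|I| >= 2).
   (I, true) with #|I| <= 1 is not a basis element: well-formed elements have
   coefficient 0 there.  (set0,false) is the unit 1 spanning G(V)_0 = A, and
   ([set i], false) is b_i spanning G(V)_1 = V. *)

Section Grassmann.
Variables (n : nat) (A : comPzSemiRingType).

Definition gidx := ({set 'I_n} * bool)%type.
Definition grass := {ffun gidx -> A}.

Definition gwf (x : grass) : Prop := forall p : gidx, p.2 -> (#|p.1| < 2)%N -> x p = 0.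

Definition ghom (r : nat) (x : grass) : Prop :=
  gwf x /\ forall p : gidx, #|p.1| <> r -> x p = 0.

Definition gadd (x y : grass) : grass := [ffun p => x p + y p].
Definition gzero : grass := [ffun _ => 0].

Definition ginv (x : grass) : grass :=
  [ffun p : gidx => if (2 <= #|p.1|)%N then x (p.1, ~~ p.2) else x p].

(* parity of the shuffle sorting the concatenation of I and J *)
Definition shuffle_sign (I J : {set 'I_n}) : bool :=
  odd #|[set q : 'I_n * 'I_n | [&& q.1 \in I, q.2 \in J & (q.2 < q.1)%N]]|.

(* the wedge product, bilinear extension of
   b_I ^ b_J = 0 if I, J meet; else b_{I u J} or b_{I u J}' by shuffle sign;
   and b_I' ^ b_J = b_I ^ b_J' = (-)(b_I ^ b_J). *)
Definition gwedge (x y : grass) : grass :=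
  [ffun K : gidx => \sum_(q : gidx * gidx |
       [&& [disjoint q.1.1 & q.2.1], q.1.1 :|: q.2.1 == K.1 &
           q.1.2 (+) q.2.2 (+) shuffle_sign q.1.1 q.2.1 == K.2])
     x q.1 * y q.2].

Definition quasi_zero (z : grass) : Prop :=
  exists x : grass, [/\ gwf x, (forall p : gidx, (#|p.1| < 2)%N -> x p = 0)
                      & z = gadd x (ginv x)].

Definition gen_circ (z : grass) : Prop :=
  quasi_zero z \/ exists w : grass, ghom 1 w /\ z = gwedge w w.

Inductive in_Gcirc : grass -> Prop :=
| Gcirc_gen z : gen_circ z -> in_Gcirc z
| Gcirc_0 : in_Gcirc gzero
| Gcirc_add z z' : in_Gcirc z -> in_Gcirc z' -> in_Gcirc (gadd z z')
| Gcirc_mull a z : gwf a -> in_Gcirc z -> in_Gcirc (gwedge a z)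
| Gcirc_mulr z a : gwf a -> in_Gcirc z -> in_Gcirc (gwedge z a).

Definition Gcirc_deg (r : nat) (z : grass) : Prop := ghom r z /\ in_Gcirc z.

End Grassmann.

(* Main.v *)
Require Import Defs.
From mathcomp Require Import all_boot all_order all_algebra.
Set Implicit Arguments. Unset Strict Implicit. Unset Printing Implicit Defensive.
Import GRing.Theory.
Local Open Scope ring_scope.

Section H.
Variables (n : nat) (A : comPzSemiRingType).

Definition gsym (z : grass n A) := forall K s, z (K, s) = z (K, ~~ s).

Lemma sh11 (i j : 'I_n) : shuffle_sign [set i] [set j] = (j < i)%N.
Proof.
rewrite /shuffle_sign.
case: (ltnP j i) => h.
  have -> : [set q : 'I_n * 'I_n | [&& q.1 \in [set i], q.2 \in [set j] & (q.2 < q.1)%N]]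
     = [set (i, j)].
    apply/setP => [[a b]]; rewrite !inE /= xpair_eqE.
    by case: eqP => [->|] //=; case: eqP => [->|] //=; rewrite h.
  by rewrite cards1.
have -> : [set q : 'I_n * 'I_n | [&& q.1 \in [set i], q.2 \in [set j] & (q.2 < q.1)%N]]
     = set0.
  apply/setP => [[a b]]; rewrite !inE /=.
  by case: eqP => [->|] //=; case: eqP => [->|] //=; rewrite ltnNge h.
by rewrite cards0.
Qed.

Lemma Gcirc_sym z : in_Gcirc z -> gsym z.
Proof.
elim => {z}.
- move=> z [[x [wx x0 ->]]|[w [[ww hw] ->]]] K s.
    rewrite !ffunE /=.
    case: (leqP 2 #|K|) => h /=; first by rewrite negbK addrC.
    by rewrite !x0.
  rewrite !ffunE.
  rewrite [RHS](reindex_inj (h := fun q : gidx n * gidx n => (q.2, q.1))); last first.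
    by move=> [a b] [c d] /= [-> ->].
  rewrite /= big_mkcond [RHS]big_mkcond; apply: eq_bigr => [[[I t1] [J t2]]] _ /=.
  have wz : forall I t, w (I, t) != 0 -> exists i, I = [set i] /\ t = false.
    move=> I0 t /eqP nz.
    have c1 : #|I0| = 1%N.
      by case: (eqVneq #|I0| 1%N) => // c; exfalso; apply: nz; apply: hw => /= e; move/eqP: c.
    have [i ->] := cards1P (introT eqP c1); exists i; split => //.
    by case: t nz => // nz; exfalso; apply: nz; apply: (ww (_, true)) => //=; rewrite c1.
  case: (eqVneq (w (I, t1)) 0) => [->|n1]; first by rewrite !mul0r mulr0; case: ifP; case: ifP.
  case: (eqVneq (w (J, t2)) 0) => [->|n2]; first by rewrite !mul0r mulr0; case: ifP; case: ifP.
  case: (wz _ _ n1) => i [-> ->]; case: (wz _ _ n2) => j [-> ->].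
  rewrite mulrC !sh11 setUC.
  case: (eqVneq i j) => [->|nij].
    by rewrite disjoints1 in_set1 eqxx.
  rewrite !disjoints1 !in_set1 [j == i]eq_sym nij /=.
  have e : (j < i)%N = ~~ (i < j)%N.
    by rewrite -leqNgt ltn_neqAle eq_sym nij.
  by rewrite e; case: (i < j)%N; case: s.
- by move=> K s; rewrite !ffunE.
- by move=> z z' _ h1 _ h2 K s; rewrite !ffunE h1 h2.
- move=> a z _ _ hz K s; rewrite !ffunE.
  rewrite [RHS](reindex_inj (h := fun q : gidx n * gidx n => (q.1, (q.2.1, ~~ q.2.2)))); last first.
    by move=> [a1 [b1 c1]] [a2 [b2 c2]] /= [-> -> /negb_inj ->].
  apply: eq_big => [[[I t1] [J t2]]|[[I t1] [J t2]] _] /=.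
    by case: t1; case: t2; case: s; case: shuffle_sign.
  by rewrite hz.
- move=> z a _ _ hz K s; rewrite !ffunE.
  rewrite [RHS](reindex_inj (h := fun q : gidx n * gidx n => ((q.1.1, ~~ q.1.2), q.2))); last first.
    by move=> [[b1 c1] a1] [[b2 c2] a2] /= [-> /negb_inj -> ->].
  apply: eq_big => [[[I t1] [J t2]]|[[I t1] [J t2]] _] /=.
    by case: t1; case: t2; case: s; case: shuffle_sign.
  by rewrite hz.
Qed.

Definition bJ (J : {set 'I_n}) : grass n A :=
  [ffun p => if p == (J, false) then 1 else 0].

Lemma bJ_hom k (I : {set 'I_n}) : #|I| = k -> ghom (n - k) (bJ (~: I)).
Proof.
move=> hI; split.
  by move=> [J t] /= -> _; rewrite ffunE xpair_eqE andbF.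
move=> [J t] /= h; rewrite ffunE; case: eqP => // [[e _]].
by exfalso; apply: h; rewrite e cardsCs card_ord setCK hI.
Qed.

Lemma compl_eq (X I : {set 'I_n}) :
  [disjoint X & ~: I] -> X :|: ~: I == setT -> X = I.
Proof.
move=> d /eqP u; apply/eqP; rewrite eqEsubset; apply/andP; split.
  by rewrite disjoints_subset setCK in d.
apply/subsetP => x xI.
have : x \in X :|: ~: I by rewrite u inE.
by rewrite inE in_setC xI orbF.
Qed.

Lemma wedge_bJ (u : grass n A) I s :
  gwedge u (bJ (~: I)) (setT, s) = u (I, s (+) shuffle_sign I (~: I)).
Proof.
rewrite ffunE (bigD1 ((I, s (+) shuffle_sign I (~: I)), (~: I, false))) /=; last first.
  rewrite setUCr eqxx disjoints_subset setCK subxx /=.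
  by case: s; case: shuffle_sign.
rewrite ffunE eqxx mulr1 big1 ?addr0 // => [[[X t1] [J t2]]] /= /andP [/and3P [d un sg] ne].
rewrite ffunE; case: eqP => [[e1 e2]|]; last by rewrite mulr0.
subst J t2; have eX := compl_eq d un; subst X.
exfalso; move: ne; rewrite !xpair_eqE !eqxx /= andbT.
by move: sg; case: t1; case: s; case: shuffle_sign.
Qed.

End H.

Theorem proposition2p16 (A : comPzSemiRingType) (n k : nat) :
  (2 <= k)%N -> (k < n)%N ->
  forall u u' : grass n A, ghom k u -> ghom k u' ->
  ((forall v : grass n A, ghom (n - k) v -> gwedge u v = gwedge u' v) -> u = u') /\
  (~ Gcirc_deg k u ->
     exists v : grass n A, ghom (n - k) v /\ ~ Gcirc_deg n (gwedge u v)).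
Proof.
move=> k2 kn u u' [wu hu] [wu' hu']; split.
  move=> H; apply/ffunP => [[I s]].
  case: (eqVneq #|I| k) => hI; last by rewrite hu ?hu' //=; apply/eqP.
  move/ffunP: (H _ (bJ_hom A hI)) => /(_ (setT, s (+) shuffle_sign I (~: I))).
  by rewrite !wedge_bJ addbK.
move=> nG.
case: (boolP [forall I : {set 'I_n}, u (I, false) == u (I, true)]) => hall.
  exfalso; apply: nG; split => //; apply: Gcirc_gen; left.
  exists [ffun p : gidx n => if (2 <= #|p.1|)%N && ~~ p.2 then u p else 0]; split.
  - by move=> [K t] /= ->; rewrite ffunE andbF.
  - by move=> [K t] /= h; rewrite ffunE leqNgt h.
  apply/ffunP => [[K s]]; rewrite !ffunE /=.
  case: (leqP 2 #|K|) => h /=.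
    move/forallP: hall => /(_ K) /eqP e.
    by case: s; rewrite /= ?addr0 ?add0r.
  by rewrite addr0 hu //= => e; move: h; rewrite e ltnNge k2.
move/forallPn: hall => [I /eqP hI].
have cI : #|I| = k.
  by apply/eqP; apply/negP => /negP c; apply: hI; rewrite !hu //; apply/eqP.
exists (bJ A (~: I)); split; first exact: bJ_hom.
move=> [_ /Gcirc_sym /(_ setT (shuffle_sign I (~: I)))].
rewrite !wedge_bJ addbb.
by case: shuffle_sign => /= e; apply: hI.
Qed.
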